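(* Let $(M_0,d,\Gamma)$ be a cone-like space and $\psi:M_0\to\mathbb{R}_+^*$ a function with $\psi\circ f=\rho(f)\psi$ for every $f\in\Gamma$, such that $\psi$ and $\psi^{-1}$ are locally bounded. Then $\psi$ is quasi-linear.
   Context: A cone-like space is a locally compact metric space $(M_0,d)$ together with a finitely generated, non-trivial group $\Gamma$ acting freely and properly discontinuously on $M_0$ by homotheties (i.e. for each $f\in\Gamma$ there is $\rho(f)>0$ with $d(f(x),f(y))=\rho(f)d(x,y)$ for all $x,y$), such that the identity is the only element of $\Gamma$ acting as an isometry, and such that the quotient $M_0/\Gamma$ is compact. The metric completion of a cone-like space is $M_0\cup\{\omega\}$ for a single point $\omega$ (the singularity); $\delta(x):=d(x,\omega)$. A positive function $\psi$ on $M_0$ is quasi-linear if there are constants $0<k_1\le k_2$ with $k_1\delta\le\psi\le k_2\delta$ on $M_0$. *)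

(* Defs.v *)
From Stdlib Require Import Reals List.
Open Scope R_scope.
Set Implicit Arguments.

Definition is_metric {M : Type} (d : M -> M -> R) : Prop :=
  (forall x y, 0 <= d x y) /\
  (forall x y, d x y = 0 <-> x = y) /\
  (forall x y, d x y = d y x) /\
  (forall x y z, d x z <= d x y + d y z).

Definition is_open {M : Type} (d : M -> M -> R) (U : M -> Prop) : Prop :=
  forall x, U x -> exists r, 0 < r /\ forall y, d x y < r -> U y.

Definition is_compact {M : Type} (d : M -> M -> R) (K : M -> Prop) : Prop :=
  forall (I : Type) (U : I -> M -> Prop),
    (forall i, is_open d (U i)) ->
    (forall x, K x -> exists i, U i x) ->
    exists l : list I, forall x, K x -> exists i, In i l /\ U i x.

Definition locally_compact {M : Type} (d : M -> M -> R) : Prop :=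
  forall x, exists K r, is_compact d K /\ 0 < r /\ forall y, d x y < r -> K y.

Definition is_group {G : Type} (mul : G -> G -> G) (e : G) (inv : G -> G) : Prop :=
  (forall a b c, mul a (mul b c) = mul (mul a b) c) /\
  (forall a, mul e a = a /\ mul a e = a) /\
  (forall a, mul (inv a) a = e /\ mul a (inv a) = e).

Inductive generated {G : Type} (mul : G -> G -> G) (e : G) (inv : G -> G)
    (S : list G) : G -> Prop :=
  | gen_e : generated mul e inv S e
  | gen_s : forall s, In s S -> generated mul e inv S s
  | gen_inv : forall a, generated mul e inv S a -> generated mul e inv S (inv a)
  | gen_mul : forall a b, generated mul e inv S a -> generated mul e inv S b ->
              generated mul e inv S (mul a b).

Definition finitely_generated {G : Type} (mul : G -> G -> G) (e : G) (inv : G -> G) : Prop :=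
  exists S : list G, forall g, generated mul e inv S g.

Definition is_action {G M : Type} (mul : G -> G -> G) (e : G) (act : G -> M -> M) : Prop :=
  (forall x, act e x = x) /\ (forall g h x, act (mul g h) x = act g (act h x)).

Definition acts_freely {G M : Type} (e : G) (act : G -> M -> M) : Prop :=
  forall g x, act g x = x -> g = e.

Definition properly_discontinuous {G M : Type} (d : M -> M -> R) (act : G -> M -> M) : Prop :=
  forall K, is_compact d K ->
    exists l : list G, forall g, (exists x, K x /\ K (act g x)) -> In g l.

(** Compactness of the quotient M/G: open sets of the quotient are the images
    of G-invariant open sets of M, so the quotient is compact iff every cover of
    M by G-invariant open sets has a finite subcover. *)
Definition compact_quotient {G M : Type} (d : M -> M -> R) (act : G -> M -> M) : Prop :=
  forall (I : Type) (U : I -> M -> Prop),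
    (forall i, is_open d (U i)) ->
    (forall i g x, U i x -> U i (act g x)) ->
    (forall x, exists i, U i x) ->
    exists l : list I, forall x, exists i, In i l /\ U i x.

Definition cone_like {G M : Type} (d : M -> M -> R)
    (mul : G -> G -> G) (e : G) (inv : G -> G)
    (act : G -> M -> M) (rho : G -> R) : Prop :=
  is_metric d /\ locally_compact d /\
  is_group mul e inv /\ finitely_generated mul e inv /\ (exists g, g <> e) /\
  is_action mul e act /\
  (forall g, 0 < rho g /\ forall x y, d (act g x) (act g y) = rho g * d x y) /\
  (forall g, rho g = 1 -> g = e) /\
  acts_freely e act /\ properly_discontinuous d act /\ compact_quotient d act.

Definition cauchy {M : Type} (d : M -> M -> R) (u : nat -> M) : Prop :=
  forall eps, 0 < eps -> exists N, forall n m, (n >= N)%nat -> (m >= N)%nat -> d (u n) (u m) < eps.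

Definition converges {M : Type} (d : M -> M -> R) (u : nat -> M) : Prop :=
  exists y, Un_cv (fun n => d (u n) y) 0.

(** delta = distance to the singularity ω, the unique point added by the metric
    completion: non-convergent Cauchy sequences exist and all of them converge to
    ω in the completion, so d(x, ω) = lim d(x, u_n) for any such u. *)
Definition dist_to_singularity {M : Type} (d : M -> M -> R) (delta : M -> R) : Prop :=
  (exists u, cauchy d u /\ ~ converges d u) /\
  forall u, cauchy d u -> ~ converges d u ->
    forall x, Un_cv (fun n => d x (u n)) (delta x).

Definition locally_bounded {M : Type} (d : M -> M -> R) (f : M -> R) : Prop :=
  forall x, exists r C, 0 < r /\ forall y, d x y < r -> Rabs (f y) <= C.

Definition quasi_linear {M : Type} (delta psi : M -> R) : Prop :=
  exists k1 k2, 0 < k1 /\ k1 <= k2 /\ forall x, k1 * delta x <= psi x <= k2 * delta x.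

(* Main.v *)
Require Import Defs.
From Stdlib Require Import Reals List Lra.
Open Scope R_scope.

Lemma cv_const_l (c : R) : Un_cv (fun _ => c) c.
Proof. intros eps He; exists 0%nat; intros; unfold Rdist; rewrite Rminus_diag, Rabs_R0; lra. Qed.

Lemma list_lower {A : Type} (f : A -> R) (l : list A) :
  (forall i, 0 < f i) -> exists m, 0 < m /\ m <= 1 /\ forall i, In i l -> m <= f i.
Proof.
  intros Hp; induction l as [|a l IH].
  - exists 1; split; [lra|split;[lra|]]; intros i [].
  - destruct IH as [m [Hm [Hm1 Hi]]]. exists (Rmin m (f a)).
    split; [apply Rmin_glb_lt; auto|]. split; [apply Rle_trans with m; [apply Rmin_l|lra]|].
    intros i [<-|Hin]; [apply Rmin_r|]. apply Rle_trans with m; [apply Rmin_l|auto].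
Qed.

Lemma list_upper {A : Type} (f : A -> R) (l : list A) :
  exists m, 1 <= m /\ forall i, In i l -> f i <= m.
Proof.
  induction l as [|a l IH].
  - exists 1; split; [lra|]; intros i [].
  - destruct IH as [m [Hm1 Hi]]. exists (Rmax m (f a)).
    split; [apply Rle_trans with m; [lra|apply Rmax_l]|].
    intros i [<-|Hin]; [apply Rmax_r|]. apply Rle_trans with m; [auto|apply Rmax_l].
Qed.

Theorem mainTheorem5 (G M : Type) (d : M -> M -> R)
    (mul : G -> G -> G) (e : G) (inv : G -> G)
    (act : G -> M -> M) (rho : G -> R) (delta psi : M -> R) :
  cone_like d mul e inv act rho ->
  dist_to_singularity d delta ->
  (forall x, 0 < psi x) ->
  (forall g x, psi (act g x) = rho g * psi x) ->
  locally_bounded d psi ->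
  locally_bounded d (fun x => / psi x) ->
  quasi_linear delta psi.
Proof.
  intros [[Hd0 [Hdeq [Hdsym Htri]]] [_ [[_ [_ Hinv]] [_ [_ [[Hact_e Hact_m] [Hrho [_ [_ [_ Hcq]]]]]]]]]]
    [[u [Hcu Hncu]] Hdelta] Hpsi Hpsig Hlb Hlbi.
  assert (Hdxx : forall x, d x x = 0) by (intro x; apply Hdeq; reflexivity).
  assert (Hback : forall g z, act (inv g) (act g z) = z).
  { intros g z. rewrite <- Hact_m. destruct (Hinv g) as [-> _]. apply Hact_e. }
  assert (Hdnn : forall x, 0 <= delta x).
  { intro x. apply (@Rle_cv_lim (fun _ => 0) (fun n => d x (u n))); [intro; apply Hd0|apply cv_const_l|apply Hdelta; auto]. }
  assert (Hdpos : forall x, 0 < delta x).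
  { intro x. destruct (Hdnn x) as [H|H]; auto. exfalso. apply Hncu. exists x.
    rewrite H. apply Hdelta with (x := x) in Hcu; auto.
    intros eps He; destruct (Hcu eps He) as [N HN]; exists N; intros n Hn.
    rewrite Hdsym; auto. }
  assert (Hlip : forall x y, delta y <= delta x + d x y).
  { intros x y. apply (@Rle_cv_lim (fun n => d y (u n)) (fun n => d x (u n) + d x y)).
    - intro n. rewrite (Hdsym x y). pose proof (Htri y x (u n)); lra.
    - apply Hdelta; auto.
    - apply CV_plus; [apply Hdelta; auto|apply cv_const_l]. }
  assert (Hdg : forall g x, delta (act g x) = rho g * delta x).
  { intros g x. apply (@UL_sequence (fun n => d (act g x) (act g (u n)))).
    - apply Hdelta.
      + intros eps He. destruct (Hrho g) as [Hr Hh].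
        destruct (Hcu (eps / rho g)) as [N HN]. { apply Rdiv_lt_0_compat; auto. }
        exists N; intros n m Hn Hm. rewrite Hh. specialize (HN n m Hn Hm).
        apply (Rmult_lt_compat_l (rho g)) in HN; auto.
        replace (rho g * (eps / rho g)) with eps in HN by (field; lra). exact HN.
      + intros [y Hy]. apply Hncu. exists (act (inv g) y).
        intros eps He. destruct (Hrho (inv g)) as [Hr Hh].
        destruct (Hy (eps / rho (inv g))) as [N HN]. { apply Rdiv_lt_0_compat; auto. }
        exists N; intros n Hn. specialize (HN n Hn). unfold Rdist in *.
        rewrite Rminus_0_r in *. rewrite <- (Hback g (u n)), Hh.
        rewrite Rabs_pos_eq in * by (apply Rmult_le_pos || apply Hd0; auto; lra).
        apply (Rmult_lt_compat_l (rho (inv g))) in HN; auto.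
        replace (rho (inv g) * (eps / rho (inv g))) with eps in HN by (field; lra). exact HN.
    - intros eps He. destruct (Hrho g) as [Hr Hh].
      destruct (Hdelta u Hcu Hncu x (eps / rho g)) as [N HN]. { apply Rdiv_lt_0_compat; auto. }
      exists N; intros n Hn. specialize (HN n Hn). unfold Rdist in *. rewrite Hh.
      replace (rho g * d x (u n) - rho g * delta x) with (rho g * (d x (u n) - delta x)) by ring.
      rewrite Rabs_mult, (Rabs_pos_eq (rho g)) by lra.
      apply (Rmult_lt_compat_l (rho g)) in HN; auto.
      replace (rho g * (eps / rho g)) with eps in HN by (field; lra). exact HN. }
  set (Pgood := fun x r a b => 0 < r /\ 0 < a /\
        forall y, d x y < r -> a * delta y <= psi y <= b * delta y).
  assert (Hloc : forall x, exists r a b, Pgood x r a b).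
  { intro x. destruct (Hlb x) as [r1 [C [Hr1 HC]]]. destruct (Hlbi x) as [r2 [C' [Hr2 HC']]].
    set (D := delta x). assert (HD : 0 < D) by apply Hdpos.
    assert (HCp : 0 < C'). { specialize (HC' x (ltac:(rewrite Hdxx; lra))).
      apply Rlt_le_trans with (2 := HC'). apply Rabs_pos_lt. apply Rgt_not_eq, Rinv_0_lt_compat, Hpsi. }
    exists (Rmin r1 (Rmin r2 (D/2))), (2 / (3 * D * C')), (2 * Rabs C / D).
    split; [apply Rmin_glb_lt; [lra|apply Rmin_glb_lt; lra]|].
    split; [apply Rdiv_lt_0_compat; [lra| apply Rmult_lt_0_compat; [lra|auto]]|].
    intros y Hy.
    assert (Hy1 : d x y < r1) by (apply Rlt_le_trans with (1 := Hy); apply Rmin_l).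
    assert (Hy2 : d x y < r2) by (apply Rlt_le_trans with (1 := Hy);
      apply Rle_trans with (Rmin r2 (D/2)); [apply Rmin_r|apply Rmin_l]).
    assert (Hy3 : d x y < D/2) by (apply Rlt_le_trans with (1 := Hy);
      apply Rle_trans with (Rmin r2 (D/2)); apply Rmin_r).
    assert (L1 := Hlip x y). assert (L2 := Hlip y x). rewrite (Hdsym y x) in L2.
    fold D in L1, L2.
    specialize (HC y Hy1). specialize (HC' y Hy2). simpl in HC'.
    assert (Hp := Hpsi y).
    rewrite Rabs_pos_eq in HC' by (apply Rlt_le, Rinv_0_lt_compat; auto).
    assert (Hpy : 1 / C' <= psi y).
    { unfold Rdiv; rewrite Rmult_1_l. rewrite <- (Rinv_inv (psi y)).
      apply Rinv_le_contravar; auto. apply Rinv_0_lt_compat; auto. }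
    assert (HCabs := Rle_abs (psi y)).
    split.
    - apply Rle_trans with (2 := Hpy). unfold Rdiv.
      apply (Rmult_le_reg_l (3 * D * C')). { apply Rmult_lt_0_compat; lra. }
      replace (3 * D * C' * (2 * / (3 * D * C') * delta y)) with (2 * delta y) by (field; lra).
      replace (3 * D * C' * (1 * / C')) with (3 * D) by (field; lra). lra.
    - apply Rle_trans with (Rabs C). { apply Rle_trans with (1 := HCabs); apply Rle_trans with (1 := HC); apply Rle_abs. }
      apply (Rmult_le_reg_l D); auto.
      replace (D * (2 * Rabs C / D * delta y)) with (2 * Rabs C * delta y) by (field; lra).
      assert (HA := Rabs_pos C). nra. }
  set (U := fun (i : M * R * R * R) (y : M) =>
         let '(x, r, a, b) := i in Pgood x r a b /\ exists g, d x (act g y) < r).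
  destruct (Hcq (M * R * R * R)%type U) as [l Hl].
  - intros [[[x r] a] b] y [Hg [g Hgy]]. destruct (Hrho g) as [Hr Hh]. exists ((r - d x (act g y)) / rho g).
    split; [apply Rdiv_lt_0_compat; lra|].
    intros z Hz. split; auto. exists g.
    apply Rle_lt_trans with (1 := Htri x (act g y) (act g z)). rewrite Hh.
    apply (Rmult_lt_compat_l (rho g)) in Hz; auto.
    replace (rho g * ((r - d x (act g y)) / rho g)) with (r - d x (act g y)) in Hz by (field; lra).
    lra.
  - intros [[[x r] a] b] g y [Hg [h Hh]]. split; auto. exists (mul h (inv g)).
    rewrite Hact_m, Hback. exact Hh.
  - intros x. destruct (Hloc x) as [r [a [b Hp]]]. exists (x, r, a, b). simpl.
    split; auto. exists e. rewrite Hact_e, Hdxx. destruct Hp; lra.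
  - set (fa := fun i : M * R * R * R => let '(_, _, a, _) := i in
                 if Rlt_dec 0 a then a else 1).
    set (fb := fun i : M * R * R * R => let '(_, _, _, b) := i in b).
    destruct (list_lower fa l) as [m [Hm [Hm1 Hml]]].
    { intros [[[x r] a] b]. simpl. destruct (Rlt_dec 0 a); lra. }
    destruct (list_upper fb l) as [K [HK HKl]].
    exists m, K. split; [auto|split; [lra|]].
    intro x. destruct (Hl x) as [[[[x0 r] a] b] [Hin [[Hr [Ha Hball]] [g Hgx]]]].
    specialize (Hball _ Hgx). rewrite Hdg, Hpsig in Hball.
    destruct (Hrho g) as [Hrg _].
    assert (Hlo : a * delta x <= psi x).
    { apply (Rmult_le_reg_l (rho g)); auto. nra. }
    assert (Hhi : psi x <= b * delta x).
    { apply (Rmult_le_reg_l (rho g)); auto. nra. }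
    specialize (Hml _ Hin). specialize (HKl _ Hin). simpl in Hml, HKl.
    destruct (Rlt_dec 0 a); [|lra].
    assert (Hx := Hdpos x). split; nra.
Qed.
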